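(* Let $N,s$ be integers with $N>2$ and $1\le s<N$. For $\lambda\in\left[\frac{\pi}{2}-\frac{\pi}{2N}s,\frac{\pi}{2}\right)$ let $C^0(s,\lambda):=\arcsin\left(\tan\left(\frac{\pi}{2}-\frac{\pi}{2N}s\right)/\tan\lambda\right)$ and $t^0(s,\lambda):=-\frac{N}{\pi}\beta(\lambda,C^0(s,\lambda))$, where $\beta(\lambda,\varphi)=\varphi-2\arctan\left(\frac{\cos\frac{\lambda}{2}\sin\varphi}{\sin\frac{\lambda}{2}+\cos\frac{\lambda}{2}\cos\varphi}\right)$ (as a real number). Then $t^0(s,-)$ is strictly decreasing, hence injective, on $\left[\frac{\pi}{2}-\frac{\pi}{2N}s,\frac{\pi}{2}\right)$, and its image of this interval is $(0,\frac{s}{2}]$.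
   Context: Explicitly, $\beta(\lambda,C^0(s,\lambda))=\arcsin\left(\cot\left(\frac{\pi}{2N}s\right)\cot\lambda\right)-2\arctan\left(\frac{\cos\frac{\lambda}{2}\cot\left(\frac{\pi}{2N}s\right)\cot\lambda}{\sqrt{1-\cot^2\left(\frac{\pi}{2N}s\right)\cot^2\lambda}\,\cos\frac{\lambda}{2}+\sin\frac{\lambda}{2}}\right)$. *)

(* Defs.v *)
From Stdlib Require Import Reals.
Open Scope R_scope.

Definition beta (lam phi : R) : R :=
  phi - 2 * atan (cos (lam / 2) * sin phi / (sin (lam / 2) + cos (lam / 2) * cos phi)).

Definition C0 (N s : nat) (lam : R) : R :=
  asin (tan (PI / 2 - PI / (2 * INR N) * INR s) / tan lam).

Definition t0 (N s : nat) (lam : R) : R :=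
  - (INR N / PI) * beta lam (C0 N s lam).

Definition lam_min (N s : nat) : R := PI / 2 - PI / (2 * INR N) * INR s.

(* Main.v *)
Require Import Defs.
From Stdlib Require Import Reals Lra Lia.
Open Scope R_scope.


Lemma key (a l : R) : 0 < a < PI/2 -> a <= l -> l < PI/2 ->
  - beta l (asin (tan a / tan l)) =
  atan ((tan a / tan l) * cos l / (sqrt (1 - (tan a / tan l)²) + sin l)).
Proof.
  intros [Ha0 Ha1] Hal Hl.
  assert (HK : 0 < tan a) by (apply tan_gt_0; lra).
  assert (HT : tan a <= tan l).
  { destruct (Req_dec a l) as [->|Hne]; [lra|].
    left; apply tan_increasing; lra. }
  set (K := tan a) in *. set (T := tan l) in *.
  set (p := K / T).
  assert (Hp0 : 0 < p) by (unfold p; apply Rdiv_lt_0_compat; lra).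
  assert (Hp1 : p <= 1).
  { unfold p. apply Rmult_le_reg_r with T; [lra|].
    unfold Rdiv; rewrite Rmult_assoc, Rinv_l; lra. }
  assert (Hpr : -1 <= p <= 1) by lra.
  set (c := sqrt (1 - p²)).
  assert (Hc0 : 0 <= c) by apply sqrt_pos.
  assert (Hcp : c^2 + p^2 - 1 = 0).
  { unfold c. simpl. rewrite Rmult_1_r, sqrt_sqrt. unfold Rsqr; ring.
    unfold Rsqr; nra. }
  assert (Hcl : 0 < cos l) by (apply cos_gt_0; lra).
  assert (Hsl : 0 < sin l) by (apply sin_gt_0; lra).
  assert (Hsu : 0 < sin (l/2)) by (apply sin_gt_0; lra).
  assert (Hcu : 0 < cos (l/2)) by (apply cos_gt_0; lra).
  set (su := sin (l/2)) in *. set (cu := cos (l/2)) in *.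
  assert (Hsc : su^2 + cu^2 - 1 = 0).
  { unfold su, cu. pose proof (sin2_cos2 (l/2)). unfold Rsqr in H. simpl. lra. }
  assert (Hsinl : sin l = 2 * su * cu).
  { unfold su, cu. rewrite <- sin_2a. f_equal. field. }
  assert (Hcosl : cos l = cu^2 - su^2).
  { unfold su, cu. simpl. rewrite !Rmult_1_r, <- cos_2a. f_equal. field. }
  unfold beta. fold su cu. rewrite sin_asin by exact Hpr. rewrite cos_asin by exact Hpr.
  fold c.
  set (D := su + cu * c).
  assert (HD : 0 < D) by (unfold D; nra).
  set (q := cu * p / D).
  assert (Hq : 0 < q) by (unfold q; apply Rdiv_lt_0_compat; nra).
  set (A := atan q).
  assert (HA0 : 0 < A) by (unfold A; rewrite <- atan_0; apply atan_increasing; lra).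
  assert (HA1 : A < PI/2) by (unfold A; pose proof (atan_bound q); lra).
  set (phi := asin p).
  assert (Hphi : - (PI/2) <= phi <= PI/2) by apply asin_bound.
  assert (HcA : 0 < cos A) by (apply cos_gt_0; lra).
  assert (HsA : sin A = q * cos A).
  { unfold A. rewrite sin_atan, cos_atan. field.
    apply Rgt_not_eq, sqrt_lt_R0. unfold Rsqr; nra. }
  assert (Hsphi : sin phi = p) by (unfold phi; apply sin_asin; exact Hpr).
  assert (Hcphi : cos phi = c) by (unfold phi, c; apply cos_asin; exact Hpr).
  set (X := 2 * A - phi).
  assert (Hn1 : 2*q*c - (1 - q^2) * p = p * (cu^2 - su^2) / D^2).
  { assert (E : 2*q*c - (1 - q^2) * p - p * (cu^2 - su^2) / D^2
               = p * cu^2 * (c^2 + p^2 - 1) / D^2).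
    { unfold q, D. field. fold D. lra. }
    rewrite Hcp in E. lra. }
  assert (Hn2 : (1 - q^2) * c + 2*q*p = (c + 2 * su * cu) / D^2).
  { assert (E : (1 - q^2) * c + 2*q*p - (c + 2 * su * cu) / D^2
               = (2*su*cu*(c^2 + p^2 - 1) + cu^2*c*(c^2+p^2-1) + c*(su^2+cu^2-1)) / D^2).
    { unfold q, D. field. fold D. lra. }
    rewrite Hcp, Hsc in E. lra. }
  assert (HsX : sin X = cos A ^ 2 * (p * (cu^2 - su^2) / D^2)).
  { rewrite <- Hn1. unfold X. rewrite sin_minus, sin_2a, cos_2a, Hsphi, Hcphi, HsA. ring. }
  assert (HcX : cos X = cos A ^ 2 * ((c + 2 * su * cu) / D^2)).
  { rewrite <- Hn2. unfold X. rewrite cos_minus, sin_2a, cos_2a, Hsphi, Hcphi, HsA. ring. }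
  assert (HcXp : 0 < cos X).
  { rewrite HcX. apply Rmult_lt_0_compat. nra.
    apply Rdiv_lt_0_compat; nra. }
  assert (HXr : - (PI/2) < X < PI/2).
  { split. unfold X; lra.
    destruct (Rlt_or_le X (PI/2)) as [h|h]; [exact h|].
    assert (cos X <= 0) by (apply cos_le_0; unfold X in *; lra). lra. }
  replace (- (phi - 2 * A)) with X by (unfold X; ring).
  rewrite <- (atan_tan X HXr). f_equal.
  unfold tan. rewrite HsX, HcX, Hsinl, Hcosl. field.
  repeat split; try lra; nra.
Qed.


Definition G (a l : R) : R :=
  (tan a / tan l) * cos l / (sqrt (1 - (tan a / tan l)²) + sin l).

Lemma tanK a l : 0 < a < PI/2 -> a <= l -> l < PI/2 -> 0 < tan a <= tan l.
Proof.
  intros Ha Hal Hl. split. apply tan_gt_0; lra.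
  destruct (Req_dec a l) as [->|Hne]; [lra|]. left; apply tan_increasing; lra.
Qed.

Lemma G_dec a l1 l2 : 0 < a < PI/2 -> a <= l1 -> l1 < l2 -> l2 < PI/2 -> G a l2 < G a l1.
Proof.
  intros Ha H1 H12 H2.
  destruct (tanK a l1 Ha H1 ltac:(lra)) as [HK HT1].
  assert (HT12 : tan l1 < tan l2) by (apply tan_increasing; lra).
  assert (Hc1 : 0 < cos l1) by (apply cos_gt_0; lra).
  assert (Hc2 : 0 < cos l2) by (apply cos_gt_0; lra).
  assert (Hc12 : cos l2 < cos l1) by (apply cos_decreasing_1; lra).
  assert (Hs1 : 0 < sin l1) by (apply sin_gt_0; lra).
  assert (Hs12 : sin l1 < sin l2) by (apply sin_increasing_1; lra).
  set (K := tan a) in *. set (T1 := tan l1) in *. set (T2 := tan l2) in *.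
  assert (Hp12 : K / T2 < K / T1).
  { unfold Rdiv. apply Rmult_lt_compat_l; [lra|]. apply Rinv_lt_contravar; nra. }
  assert (Hp2 : 0 < K / T2) by (apply Rdiv_lt_0_compat; lra).
  assert (Hp1 : K / T1 <= 1).
  { apply Rmult_le_reg_r with T1; [lra|]. unfold Rdiv; rewrite Rmult_assoc, Rinv_l; lra. }
  assert (Hsq : sqrt (1 - (K/T1)²) <= sqrt (1 - (K/T2)²)).
  { apply sqrt_le_1_alt. unfold Rsqr; nra. }
  assert (Hsq0 : 0 <= sqrt (1 - (K/T1)²)) by apply sqrt_pos.
  unfold G. fold K T1 T2.
  set (c1 := sqrt (1 - (K/T1)²)) in *. set (c2 := sqrt (1 - (K/T2)²)) in *.
  set (p1 := K/T1) in *. set (p2 := K/T2) in *.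
  apply Rmult_lt_reg_r with ((c1 + sin l1) * (c2 + sin l2)); [nra|].
  replace (p2 * cos l2 / (c2 + sin l2) * ((c1 + sin l1) * (c2 + sin l2)))
    with (p2 * cos l2 * (c1 + sin l1)) by (field; lra).
  replace (p1 * cos l1 / (c1 + sin l1) * ((c1 + sin l1) * (c2 + sin l2)))
    with (p1 * cos l1 * (c2 + sin l2)) by (field; lra).
  assert (h1 : p2 * cos l2 < p1 * cos l1) by nra.
  assert (h2 : 0 < c1 + sin l1) by lra.
  assert (h3 : c1 + sin l1 < c2 + sin l2) by lra.
  assert (h4 : 0 < p1 * cos l1) by nra.
  apply Rlt_trans with (p1 * cos l1 * (c1 + sin l1)).
  apply Rmult_lt_compat_r; lra. apply Rmult_lt_compat_l; lra.
Qed.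

Lemma G_bounds a l : 0 < a < PI/2 -> a <= l -> l < PI/2 -> 0 < G a l <= / tan a.
Proof.
  intros Ha H1 H2.
  destruct (tanK a l Ha H1 H2) as [HK HT].
  assert (Hc : 0 < cos l) by (apply cos_gt_0; lra).
  assert (Hs : 0 < sin l) by (apply sin_gt_0; lra).
  assert (Ht : tan l = sin l / cos l) by reflexivity.
  unfold G. set (K := tan a) in *. set (T := tan l) in *.
  set (c := sqrt (1 - (K/T)²)).
  assert (Hc0 : 0 <= c) by apply sqrt_pos.
  assert (Hp : 0 < K / T) by (apply Rdiv_lt_0_compat; lra).
  idtac. split. apply Rdiv_lt_0_compat. apply Rmult_lt_0_compat; lra. lra.
  apply Rle_trans with (K / T * cos l / sin l).
  { unfold Rdiv. apply Rmult_le_compat_l. nra. apply Rinv_le_contravar; lra. }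
  replace (K / T * cos l / sin l) with (K / (T * T)).
  2:{ rewrite Ht. field. lra. }
  assert (HT0 : 0 < T) by lra.
  apply Rmult_le_reg_r with (K * (T*T)). apply Rmult_lt_0_compat; [lra|]. apply Rmult_lt_0_compat; lra.
  replace (K / (T*T) * (K * (T*T))) with (K*K) by (field; lra).
  replace (/ K * (K * (T*T))) with (T*T) by (field; lra). nra.
Qed.

Lemma G_inv a w : 0 < a < PI/2 -> 0 < w <= / tan a ->
  exists l, a <= l /\ l < PI/2 /\ G a l = w.
Proof.
  intros Ha [Hw0 Hw1].
  assert (HK : 0 < tan a) by (apply tan_gt_0; lra).
  set (K := tan a) in *.
  set (m := K / w).
  assert (Hm : K*K <= m).
  { unfold m. apply Rmult_le_reg_r with w; [lra|].
    replace (K / w * w) with K by (field; lra).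
    apply Rmult_le_compat_l with (r := K) in Hw1; [|lra].
    rewrite Rinv_r in Hw1 by lra. nra. }
  set (z := (m*m + K*K) / (2*m + 1 - K*K)).
  assert (Hden : 0 < 2*m + 1 - K*K) by nra.
  assert (HzK : K*K <= z).
  { unfold z. apply Rmult_le_reg_r with (2*m+1-K*K); [lra|].
    replace ((m * m + K * K) / (2 * m + 1 - K * K) * (2 * m + 1 - K * K)) with (m*m+K*K) by (field; lra).
    nra. }
  assert (Hmz : z <= m).
  { unfold z. apply Rmult_le_reg_r with (2*m+1-K*K); [lra|].
    replace ((m * m + K * K) / (2 * m + 1 - K * K) * (2 * m + 1 - K * K)) with (m*m+K*K) by (field; lra).
    nra. }
  assert (Hz0 : 0 < z) by nra.
  assert (Hmzsq : (m - z)^2 = (z - K*K) * (z + 1)).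
  { assert (E : z * (2*m + 1 - K*K) = m*m + K*K) by (unfold z; field; lra). nra. }
  set (r := sqrt z).
  assert (Hr : r * r = z) by (apply sqrt_sqrt; lra).
  assert (Hr0 : 0 < r) by (apply sqrt_lt_R0; lra).
  assert (HKr : K <= r) by nra.
  exists (atan r). split; [|split].
  - assert (Ea : a = atan K) by (unfold K; rewrite atan_tan; lra).
    rewrite Ea. destruct (Req_dec K r) as [e|Hne]; [rewrite e; lra|]. left; apply atan_increasing; lra.
  - pose proof (atan_bound r); lra.
  - unfold G. rewrite tan_atan, cos_atan, sin_atan. fold K.
    set (S := sqrt (1 + r²)).
    assert (HS : S * S = 1 + z) by (unfold S, Rsqr; rewrite sqrt_sqrt; nra).
    assert (HS0 : 0 < S) by (apply sqrt_lt_R0; unfold Rsqr; nra).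
    set (c := sqrt (1 - (K / r)²)).
    assert (Hc0 : 0 <= c) by apply sqrt_pos.
    assert (Hc : c * c = 1 - K*K / z).
    { unfold c. rewrite sqrt_sqrt. unfold Rsqr. rewrite <- Hr. field. lra.
      unfold Rsqr. replace (K / r * (K / r)) with (K*K / z) by (rewrite <- Hr; field; lra).
      apply Rmult_le_reg_r with z; [lra|].
      replace ((1 - K * K / z) * z) with (z - K*K) by (field; lra). lra. }
    assert (Hprod : r * c * S = m - z).
    { assert (E2 : (r * c * S)^2 = (m - z)^2).
      { rewrite Hmzsq. replace ((r*c*S)^2) with ((r*r) * (c*c) * (S*S)) by ring.
        rewrite Hr, Hc, HS. field. lra. }
      assert (0 <= r * c * S) by (apply Rmult_le_pos; nra).
      nra. }
    apply Rmult_eq_reg_r with (r * c * S + z). 2: nra.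
    replace (K / r * (1 / S) / (c + r / S) * (r * c * S + z)) with (K * (r * c * S + z) / (r * (c*S + r))).
    2:{ field. repeat split; nra. }
    assert (Em : r * (c * S + r) = m) by (replace (r * (c * S + r)) with (r*c*S + r*r) by ring; rewrite Hprod, Hr; ring).
    rewrite Em, Hprod. unfold m. field. lra.
Qed.

Theorem lemma25 (N s : nat) (hN : (2 < N)%nat) (hs1 : (1 <= s)%nat) (hsN : (s < N)%nat) :
  (forall l1 l2 : R,
      lam_min N s <= l1 -> l1 < l2 -> l2 < PI / 2 ->
      t0 N s l2 < t0 N s l1)
  /\
  (forall y : R,
      (exists l : R, lam_min N s <= l /\ l < PI / 2 /\ t0 N s l = y)
      <-> (0 < y /\ y <= INR s / 2)).
Proof.
  assert (HN : 0 < INR N) by (apply lt_0_INR; lia).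
  assert (Hs : 1 <= INR s) by (apply (le_INR 1); lia).
  assert (HsN : INR s < INR N) by (apply lt_INR; lia).
  assert (HPI : 0 < PI) by apply PI_RGT_0.
  assert (Hx0 : 0 < PI / (2 * INR N) * INR s).
  { apply Rmult_lt_0_compat; [apply Rdiv_lt_0_compat|]; lra. }
  assert (Hx1 : PI / (2 * INR N) * INR s < PI / 2).
  { apply Rmult_lt_reg_r with (2 * INR N / PI). apply Rdiv_lt_0_compat; lra.
    replace (PI / (2 * INR N) * INR s * (2 * INR N / PI)) with (INR s) by (field; lra).
    replace (PI / 2 * (2 * INR N / PI)) with (INR N) by (field; lra). lra. }
  assert (Ha : 0 < lam_min N s < PI / 2) by (unfold lam_min; lra).
  set (a := lam_min N s) in *.
  assert (Hc : 0 < INR N / PI) by (apply Rdiv_lt_0_compat; lra).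
  assert (Ht0 : forall l, a <= l -> l < PI/2 -> t0 N s l = INR N / PI * atan (G a l)).
  { intros l H1 H2. unfold t0, C0. change (PI / 2 - PI / (2 * INR N) * INR s) with a.
    unfold G. rewrite <- (key a l Ha H1 H2). ring. }
  assert (HtanK : 0 < tan a) by (apply tan_gt_0; lra).
  assert (Hatan : atan (/ tan a) = PI/2 - a).
  { rewrite atan_inv by exact HtanK. rewrite atan_tan; lra. }
  assert (Hend : INR N / PI * (PI/2 - a) = INR s / 2).
  { unfold a, lam_min. field. lra. }
  split.
  - intros l1 l2 H1 H12 H2. rewrite !Ht0 by lra.
    apply Rmult_lt_compat_l; [exact Hc|]. apply atan_increasing. apply G_dec; lra.
  - intros y. split.
    + intros [l [H1 [H2 H3]]]. rewrite Ht0 in H3 by lra. subst y.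
      destruct (G_bounds a l Ha H1 H2) as [Hg0 Hg1].
      split.
      * apply Rmult_lt_0_compat; [exact Hc|]. rewrite <- atan_0. apply atan_increasing; exact Hg0.
      * rewrite <- Hend. apply Rmult_le_compat_l; [lra|]. rewrite <- Hatan.
        destruct Hg1 as [h|h]. left; apply atan_increasing; exact h. rewrite h; lra.
    + intros [Hy0 Hy1].
      set (th := y * PI / INR N).
      assert (Hth0 : 0 < th) by (unfold th; apply Rdiv_lt_0_compat; [apply Rmult_lt_0_compat|]; lra).
      assert (Hth1 : th <= PI/2 - a).
      { apply Rmult_le_reg_l with (INR N / PI); [exact Hc|]. rewrite Hend.
        unfold th. replace (INR N / PI * (y * PI / INR N)) with y by (field; lra). lra. }
      assert (Hw0 : 0 < tan th) by (apply tan_gt_0; lra).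
      assert (Htp : tan (PI/2 - a) = / tan a).
      { assert (0 < sin a) by (apply sin_gt_0; lra).
        assert (0 < cos a) by (apply cos_gt_0; lra).
        unfold tan. rewrite sin_shift, cos_shift. field. lra. }
      assert (Hw1 : tan th <= / tan a).
      { rewrite <- Htp. destruct Hth1 as [h|h]. left; apply tan_increasing; lra. rewrite h; lra. }
      destruct (G_inv a (tan th) Ha (conj Hw0 Hw1)) as [l [H1 [H2 H3]]].
      exists l. split; [exact H1|]. split; [exact H2|].
      rewrite Ht0 by lra. rewrite H3, atan_tan by lra. unfold th. field. lra.
Qed.
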